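(* Let $T$ be a tree and $x,y$ distinct leaves of $T$. Let $P$ be the $xy$-path in $T$, and let $x',y'$ be the vertices of $T$ adjacent to $x$ and $y$, respectively. Write $V(P)=\{0,1,\ldots,r\}$ along the path with $x=0$ and $y=r$. For $i\in\{1,\ldots,r-1\}$ let $T_i$ be the union of the components of $T-V(P)$ that are adjacent to vertex $i$ in $T$ (the empty graph if there are none). If $T'$ is the tree obtained from $T$ by deleting $x$ and adding a new leaf adjacent to $y'$, then $$W(T')-W(T)=\sum_{i=1}^{r-1}(r-2i)|V(T_i)|-(r-2).$$
   Context: All graphs are finite and simple; $d(u,v)$ denotes distance and $W(G)=\sum_{\{u,v\}\subseteq V(G)} d(u,v)$ is the Wiener index (sum over unordered pairs of vertices). A leaf is a vertex of degree $1$. *)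

(* Defs.v *)
From mathcomp Require Import all_boot all_order all_algebra.
Set Implicit Arguments. Unset Strict Implicit. Unset Printing Implicit Defensive.
Import GRing.Theory Num.Theory.

Definition simple_graph (T : finType) (e : rel T) : Prop :=
  symmetric e /\ irreflexive e.

Definition connected_graph (T : finType) (e : rel T) : Prop :=
  forall u v : T, connect e u v.

Definition acyclic (T : finType) (e : rel T) : Prop :=
  forall c : seq T, 3 <= size c -> uniq c -> ~~ cycle e c.

Definition is_tree (T : finType) (e : rel T) : Prop :=
  [/\ simple_graph e, connected_graph e & acyclic e].

Definition deg (T : finType) (e : rel T) (v : T) : nat := #|[set w | e v w]|.

Definition is_leaf (T : finType) (e : rel T) (v : T) : Prop := deg e v = 1%N.

Definition walk_len (T : finType) (e : rel T) (u v : T) (n : nat) : bool :=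
  [exists p : n.-tuple T, path e u p && (last u p == v)].

(* distance: least n with a walk of length n (for connected graphs the
   least such n is < #|T|, so searching iota 0 #|T| is exhaustive) *)
Definition dist (T : finType) (e : rel T) (u v : T) : nat :=
  find (walk_len e u v) (iota 0 #|T|).

Definition wiener (T : finType) (e : rel T) : nat :=
  \sum_(u : T) \sum_(v : T | enum_rank u < enum_rank v) dist e u v.

(* the tree obtained by deleting leaf x and adding a new leaf adjacent to y';
   realised on the same vertex set, with the new leaf playing the role of x *)
Definition move_leaf (T : finType) (e : rel T) (x y' : T) : rel T :=
  fun u v => if u == x then v == y' else if v == x then u == y' else e u v.

(* vertex set of T_i: vertices off the path P (given by its vertex list Pv)
   lying in a component of T - V(P) that has a vertex adjacent to pi *)
Definition hanging (T : finType) (e : rel T) (Pv : seq T) (pi : T) : {set T} :=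
  [set v | (v \notin Pv) &&
     [exists w, [&& w \notin Pv, e pi w &
        connect (fun a b => [&& e a b, a \notin Pv & b \notin Pv]) w v]]].

(* Main.v *)
Require Import Defs.
From mathcomp Require Import all_boot all_order all_algebra zify.
Import GRing.Theory Num.Theory.
Set Implicit Arguments. Unset Strict Implicit.

Section Gen.
Variable T : finType.
Implicit Types (e : rel T) (u v x : T) (s : seq T).

Lemma walk_lenP e u v n :
  reflect (exists s, [/\ path e u s, last u s = v & size s = n]) (walk_len e u v n).
Proof.
apply: (iffP existsP) => [[t /andP[pt /eqP lt]] | [s [ps ls ss]]].
  by exists (val t); split => //; exact: size_tuple.
subst n; exists (in_tuple s); by rewrite /= ps ls eqxx.
Qed.

Lemma uniq_size_lt u s : uniq (u :: s) -> size s < #|T|.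
Proof.
move/card_uniqP => H; have := max_card (mem (u :: s)).
by rewrite [#|_|]H.
Qed.

Lemma dist_le e u v n : walk_len e u v n -> n < #|T| -> dist e u v <= n.
Proof.
move=> w nN; rewrite /dist; case: leqP => // H.
have := before_find 0 H; rewrite nth_iota // add0n w //.
Qed.

Lemma dist_walk e u v n : walk_len e u v n -> n < #|T| ->
  walk_len e u v (dist e u v) /\ dist e u v < #|T|.
Proof.
move=> w nN.
have hs : has (walk_len e u v) (iota 0 #|T|).
  by apply/hasP; exists n => //; rewrite mem_iota.
have := nth_find 0 hs; rewrite has_find size_iota in hs.
by rewrite nth_iota // add0n.
Qed.

Lemma shortest e u v n : walk_len e u v n -> n < #|T| ->
  exists s, [/\ path e u s, last u s = v, uniq (u :: s) & size s = dist e u v].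
Proof.
move=> w nN; have [w' dN] := dist_walk w nN.
case/walk_lenP: w' => t [pt lt st].
move: st; rewrite -lt; case: (shortenP pt) => s' ps' us' sub st.
exists s'; split => //.
apply/eqP; rewrite eqn_leq; apply/andP; split.
  rewrite -st; apply: uniq_leq_size => //; by case/andP: us'.
apply: dist_le; last exact: uniq_size_lt us'.
by apply/walk_lenP; exists s'.
Qed.

Lemma last_rev_belast (b : T) s : last (last b s) (rev (belast b s)) = b.
Proof.
case: s => [|c s] //=; by rewrite rev_cons last_rcons.
Qed.

Lemma walk_len_sym e u v n : symmetric e -> walk_len e u v n -> walk_len e v u n.
Proof.
move=> sym /walk_lenP [s [ps ls ss]]; apply/walk_lenP.
exists (rev (belast u s)); split.
- have H : e =2 (fun z => e^~ z) by move=> a b; exact: sym.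
  by rewrite -ls rev_path -(eq_path H).
- by rewrite -ls last_rev_belast.
- by rewrite size_rev size_belast.
Qed.

Lemma dist_sym e u v : symmetric e -> dist e u v = dist e v u.
Proof.
move=> sym; rewrite /dist; apply: eq_find => n.
by apply/idP/idP; apply: walk_len_sym.
Qed.

Lemma dist0 e u : dist e u u = 0.
Proof.
rewrite /dist; have : 0 < #|T| by apply/card_gt0P; exists u.
case: #|T| => // n _ /=.
have -> : walk_len e u u 0 by apply/walk_lenP; exists [::].
by [].
Qed.

Lemma avoid_leaf e x x0 u s : symmetric e -> (forall w, e x w -> w = x0) ->
  path e u s -> uniq (u :: s) -> u != x -> last u s != x -> x \notin s.
Proof.
move=> sym lf ps us ux lsx; apply/negP => xs.
move: ps us lsx; case/splitPr: xs => s1 s2.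
rewrite last_cat -cat_cons; case: s2 => [|b s2]; first by rewrite /= eqxx.
rewrite cat_path => /andP[_ pl] us _; move: pl => /= /and3P[e1 e2 _].
have hb := lf _ e2; rewrite sym in e1; have ha := lf _ e1.
move: us; rewrite cat_uniq => /and3P[_ /negP H _]; apply: H; apply/hasP.
exists b; first by rewrite !inE eqxx orbT.
by rewrite /= hb -ha mem_last.
Qed.

Lemma transfer e e' x x0 u v m : symmetric e -> (forall w, e x w -> w = x0) ->
  {in [pred a | a != x] &, e =2 e'} -> u != x -> v != x ->
  walk_len e u v m -> m < #|T| ->
  walk_len e' u v (dist e u v) /\ dist e' u v <= dist e u v.
Proof.
move=> sym lf agree ux vx w mN.
have [s [ps ls us ss]] := shortest w mN.
have xs : x \notin s by apply: (avoid_leaf sym lf ps us ux); rewrite ls.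
have ps' : path e' u s.
  rewrite -(eq_in_path agree) //= ux /=.
  by apply/allP => a as_ /=; apply: contraTneq as_ => ->.
have w' : walk_len e' u v (dist e u v) by apply/walk_lenP; exists s.
split => //; apply: dist_le w' _; rewrite -ss; exact: uniq_size_lt us.
Qed.

Lemma leaf_dist e x x0 v m : symmetric e -> (forall w, e x w = (w == x0)) ->
  x0 != x -> v != x -> walk_len e x0 v m -> m < #|T| ->
  dist e x v = (dist e x0 v).+1.
Proof.
move=> sym lf x0x vx w mN.
have lf' : forall w, e x w -> w = x0 by move=> a; rewrite lf => /eqP.
have [s [ps ls us ss]] := shortest w mN.
have xs : x \notin s by apply: (avoid_leaf sym lf' ps us x0x); rewrite ls.
have us' : uniq (x :: x0 :: s) by rewrite cons_uniq us andbT inE negb_or xs eq_sym x0x.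
have w1 : walk_len e x v (size s).+1.
  by apply/walk_lenP; exists (x0 :: s); rewrite /= lf eqxx ps ls.
have le1 := dist_le w1 (uniq_size_lt us').
have [w2 dN] := dist_walk w1 (uniq_size_lt us').
case/walk_lenP: w2 => t [pt lt st].
case: t pt lt st => [|a t] /=; first by move=> _ lt; rewrite lt eqxx in vx.
move=> /andP[exa pt] lt st; move: exa; rewrite lf => /eqP ea; subst a.
have w3 : walk_len e x0 v (size t) by apply/walk_lenP; exists t.
have := dist_le w3; rewrite st => /(_ (ltnW dN)).
rewrite -ss in le1 *; lia.
Qed.

End Gen.

Section Tree.
Variable T : finType.
Variable e : rel T.
Hypothesis sym : symmetric e.
Hypothesis irr : irreflexive e.
Hypothesis acyc : acyclic e.

Lemma tree_path_unique x p q : path e x p -> path e x q ->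
  uniq (x :: p) -> uniq (x :: q) -> last x p = last x q -> p = q.
Proof.
elim: p x q => [|a p IH] x [|b q] //=.
- move=> _ _ _ /andP[xq _] lq; by rewrite lq mem_last in xq.
- move=> _ _ /andP[xp _] _ lq; by rewrite -lq mem_last in xp.
move=> /andP[exa pa] /andP[exb pb] /andP[xap uap] /andP[xbq ubq] lpq.
case: (a =P b) => [eab | nab].
  subst b; congr (_ :: _); exact: (IH a q).
pose w := p ++ rev (belast b q).
have pw : path e a w.
  rewrite cat_path pa /= lpq rev_path.
  have H : e =2 (fun z => e^~ z) by move=> c d; exact: sym.
  by rewrite -(eq_path H).
have lw : last a w = b by rewrite last_cat lpq last_rev_belast.
have xw : x \notin a :: w.
  apply/negP; rewrite inE => /orP[/eqP xa | ].
    by rewrite xa inE eqxx in xap.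
  rewrite mem_cat => /orP[xp | ].
    by rewrite inE xp orbT in xap.
  rewrite mem_rev => /mem_belast; by rewrite (negbTE xbq).
move: lw xw; case: (shortenP pw) => s ps us sub lw xw.
have xs : x \notin a :: s.
  apply: contra xw; rewrite !inE => /orP[-> // | /sub ->]; by rewrite orbT.
have : ~~ cycle e (x :: a :: s).
  apply: acyc; last by rewrite cons_uniq xs us.
  case: s {ps us sub xs} lw => [/= ab|c s _] //.
rewrite /= rcons_path ps exa lw sym exb.
by [].
Qed.

Lemma tree_dist u s : path e u s -> uniq (u :: s) -> dist e u (last u s) = size s.
Proof.
move=> ps us.
have w : walk_len e u (last u s) (size s) by apply/walk_lenP; exists s.
have [s' [ps' ls' us' ss']] := shortest w (uniq_size_lt us).
rewrite -ss'; congr size; apply: (@tree_path_unique u) => //; by rewrite ls'.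
Qed.

Lemma subpath x p j i : path e x p -> uniq (x :: p) -> j <= i -> i <= size p ->
  let A := take (i - j) (drop j p) in
  [/\ path e (nth x (x :: p) j) A, last (nth x (x :: p) j) A = nth x (x :: p) i,
      uniq (nth x (x :: p) j :: A), {subset nth x (x :: p) j :: A <= x :: p}
    & size A = i - j].
Proof.
elim: j x p i => [|j IH] x p i pp up ji ip.
  rewrite subn0 drop0 /=.
  have ht : x :: take i p = take i.+1 (x :: p) by [].
  split.
  - by move: pp; rewrite -{1}(cat_take_drop i p) cat_path => /andP[].
  - rewrite (last_nth x) size_takel // ht nth_take //.
  - by rewrite -cons_uniq ht take_uniq.
  - by move=> a; rewrite ht => /mem_take.
  - exact: size_takel.
case: p pp up ip => [|a p]; first by move=> _ _ /= ip; lia.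
move=> pp0 up0 ip0.
have /andP[exa pp] : e x a && path e a p := pp0.
have /andP[xap up] : (x \notin a :: p) && uniq (a :: p) := up0.
have ip : i <= (size p).+1 := ip0; clear ip0.
case: i ji ip => [|i] // ji ip.
have [H1 H2 H3 H4 H5] := IH a p i pp up ji ip.
have E1 : nth x (x :: a :: p) j.+1 = nth a (a :: p) j.
  by rewrite [LHS]/=; apply: set_nth_default; rewrite /=; lia.
have E2 : nth x (x :: a :: p) i.+1 = nth a (a :: p) i.
  by rewrite [LHS]/=; apply: set_nth_default; rewrite /=; lia.
have E3 : take (i.+1 - j.+1) (drop j.+1 (a :: p)) = take (i - j) (drop j p).
  by rewrite subSS.
move=> A; rewrite /A E1 E2 E3 subSS; split => //.
by move=> c /H4 cin; rewrite inE cin orbT.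
Qed.

Lemma hang_path (S : seq T) z v : z \in S -> v \in hanging e S z ->
  exists Q, [/\ path e z Q, last z Q = v, uniq (z :: Q) & all (fun a => a \notin S) Q].
Proof.
move=> zS; rewrite inE => /andP[vS /existsP[w /and3P[wS ezw /connectP[s ps ->]]]].
have alls : all (fun a => a \notin S) s.
  elim: s w ps {wS ezw} => [|b s IHs] w //= /andP[/and3P[_ _ bS] pb].
  by rewrite bS (IHs b).
have pe : path e w s.
  by apply: sub_path ps => c d /and3P[].
case: (shortenP pe) => s' ps' us' sub.
exists (w :: s'); split => //=.
- by rewrite ezw.
  apply/andP; split; last exact: us'.
  rewrite inE negb_or; apply/andP; split.
    by apply/eqP => zw; rewrite zw (negbTE wS) in zS.
  apply/negP => /sub zs; by move/allP: alls => /(_ z zs); rewrite zS.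
- rewrite wS /=; apply/allP => c /sub cs; exact: (allP alls).
Qed.

Lemma Kdist x p (S : seq T) j i v : path e x p -> uniq (x :: p) -> S =i x :: p ->
  j <= i -> i <= size p ->
  (v = nth x (x :: p) i \/ v \in hanging e S (nth x (x :: p) i)) ->
  dist e (nth x (x :: p) j) v = (i - j) + dist e (nth x (x :: p) i) v.
Proof.
move=> pp up SE ji ip hv.
set z := nth x (x :: p) i.
have zP : z \in x :: p by apply: mem_nth; rewrite /=; lia.
have [Q [pQ lQ uQ aQ]] : exists Q, [/\ path e z Q, last z Q = v, uniq (z :: Q)
    & all (fun a => a \notin S) Q].
  case: hv => [-> | hv]; first by exists [::].
  by apply: hang_path => //; rewrite SE.
have [H1 H2 H3 H4 H5] := subpath pp up ji ip.
set A := take (i - j) (drop j p) in H1 H2 H3 H4 H5.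
have uR : uniq (nth x (x :: p) j :: A ++ Q).
  rewrite -cat_cons cat_uniq H3 /=; apply/andP; split.
    apply/hasPn => c cQ; apply/negP => /H4; rewrite -SE.
    by move/allP: aQ => /(_ c cQ) /negbTE ->.
  by case/andP: uQ.
have pR : path e (nth x (x :: p) j) (A ++ Q) by rewrite cat_path H1 H2.
have := tree_dist pR uR; rewrite last_cat H2 lQ => ->.
rewrite size_cat H5 -lQ tree_dist //.
Qed.

End Tree.

Section Tree2.
Variable T : finType.
Variable e : rel T.
Hypothesis sym : symmetric e.
Hypothesis irr : irreflexive e.
Hypothesis acyc : acyclic e.

Lemma Kdist2 x p j i v : path e x p -> uniq (x :: p) ->
  j <= size p -> i <= size p ->
  (v = nth x (x :: p) i \/ v \in hanging e (x :: p) (nth x (x :: p) i)) ->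
  dist e (nth x (x :: p) j) v = (i - j) + (j - i) + dist e (nth x (x :: p) i) v.
Proof.
move=> pp up jp ip hv.
case: (leqP j i) => ji.
  rewrite (Kdist sym acyc (S := x :: p) pp up _ ji ip hv) //.
  have -> : j - i = 0 by lia.
  by rewrite addn0.
set y := last x p; set q := rev (belast x p).
have Eq : y :: q = rev (x :: p) by rewrite [x :: p]lastI rev_rcons.
have pq : path e y q.
  have H : e =2 (fun z => e^~ z) by move=> c d; exact: sym.
  by rewrite /y /q rev_path -(eq_path H).
have uq : uniq (y :: q) by rewrite Eq rev_uniq.
have sq : size q = size p by rewrite /q size_rev size_belast.
have nE : forall k, k <= size p -> nth x (x :: p) k = nth y (y :: q) (size q - k).
  move=> k kp; rewrite Eq nth_rev /=; last by lia.
  rewrite (set_nth_default x); last by rewrite /=; lia.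
  congr nth; lia.
have SE : x :: p =i y :: q by move=> c; rewrite Eq mem_rev.
rewrite !nE // in hv *.
rewrite (Kdist sym acyc (S := x :: p) pq uq SE _ _ hv); try lia.
Qed.

Lemma first_hit (S : seq T) v s : path e v s -> v \notin S -> last v s \in S ->
  exists w z, [/\ w \notin S, z \in S, e w z &
    connect (fun a b => [&& e a b, a \notin S & b \notin S]) v w].
Proof.
elim: s v => [|a s IH] v /=; first by move=> _ vS vS'; rewrite vS' in vS.
move=> /andP[eva ps] vS la.
case aS: (a \in S).
  by exists v, a; split.
have [w [z [wS zS ewz cw]]] := IH a ps (negbT aS) la.
exists w, z; split => //.
apply: connect_trans cw; apply: connect1; by rewrite eva vS aS.
Qed.

End Tree2.

Lemma leaf_uniq (T : finType) (e : rel T) v a b : is_leaf e v -> e v a -> e v b -> a = b.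
Proof.
rewrite /is_leaf /deg => /eqP /cards1P [c Hc] ea eb.
have : a \in [set w | e v w] by rewrite inE.
have : b \in [set w | e v w] by rewrite inE.
by rewrite Hc !inE => /eqP -> /eqP ->.
Qed.



Lemma wiener2 (T : finType) (e : rel T) : symmetric e ->
  (2 * wiener e = \sum_(u : T) \sum_(v : T) dist e u v)%N.
Proof.
move=> sym; rewrite /wiener mul2n -addnn.
have E : forall u v, dist e u v =
   ((if enum_rank u < enum_rank v then dist e u v else 0)
  + (if enum_rank v < enum_rank u then dist e u v else 0))%N.
  move=> u v; case: (ltngtP (enum_rank u) (enum_rank v)) => h; rewrite ?addn0 ?add0n //.
  by move/ord_inj/enum_rank_inj: h => ->; rewrite dist0.
have -> : (\sum_(u : T) \sum_(v : T) dist e u v =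
  \sum_(u : T) \sum_(v : T) (if enum_rank u < enum_rank v then dist e u v else 0)
  + \sum_(u : T) \sum_(v : T) (if enum_rank v < enum_rank u then dist e u v else 0))%N.
  rewrite -big_split /=; apply: eq_bigr => u _; rewrite -big_split /=.
  by apply: eq_bigr => v _; rewrite -E.
congr (_ + _)%N; first by apply: eq_bigr => u _; rewrite big_mkcond.
rewrite exchange_big; apply: eq_bigr => u _; rewrite big_mkcond.
by apply: eq_bigr => v _; rewrite dist_sym.
Qed.


Local Open Scope ring_scope.

Lemma Posz_sum (I : finType) (F : I -> nat) :
  Posz (\sum_(i : I) F i)%N = \sum_(i : I) Posz (F i).
Proof. exact: (big_morph Posz PoszD). Qed.

Lemma arith n :
  \sum_(0 <= k < n.+2) (Posz (k.+1 - n.+1 + (n.+1 - k.+1))%N - Posz (k.+1 - 1 + (1 - k.+1))%N)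
  = - (n%:Z).
Proof.
rewrite big_nat_recr //=.
have -> : \sum_(0 <= k < n.+1) (Posz (k.+1 - n.+1 + (n.+1 - k.+1))%N - Posz (k.+1 - 1 + (1 - k.+1))%N)
   = \sum_(0 <= k < n.+1) (Posz (n - k)%N - Posz k).
  apply: eq_big_nat => k /andP[_ kn]; congr (Posz _ - Posz _); lia.
rewrite sumrB.
have -> : \sum_(0 <= k < n.+1) Posz (n - k)%N = \sum_(0 <= k < n.+1) Posz k.
  rewrite big_nat_rev /=; apply: eq_big_nat => k /andP[_ kn]; congr Posz; lia.
rewrite subrr add0r.
lia.
Qed.

Lemma L_S (m n : nat) : Posz m.+1 - Posz n.+1 = Posz m - Posz n.
Proof. lia. Qed.
Lemma L_half (a b : nat) (s : int) : Posz (2 * a)%N - Posz (2 * b)%N = s + s -> Posz a - Posz b = s.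
Proof. lia. Qed.
Lemma L_uniq (i j a b : nat) : a = (j - i + (i - j) + b)%N -> b = (i - j + (j - i) + a)%N -> i = j.
Proof. lia. Qed.
Lemma L_h (r i d : nat) : (1 <= i < r)%N ->
  Posz (i - r.-1 + (r.-1 - i) + d)%N - Posz (i - 1 + (1 - i) + d)%N = Posz r - Posz (2 * i)%N.
Proof. lia. Qed.
Lemma L_idx (k n : nat) : k != 0%N -> k != n -> (k < n.+1)%N -> (1 <= k < n)%N.
Proof. lia. Qed.
Lemma L_n (n : nat) : - (n%:Z) = 2%:Z - (n.+2)%:Z.
Proof. lia. Qed.
Lemma L_fin (a : int) (r : nat) : (2%:Z - r%:Z) + a = a - (r%:Z - 2).
Proof. lia. Qed.

Lemma move_leaf_sym (T : finType) (e : rel T) x y' : symmetric e -> symmetric (move_leaf e x y').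
Proof.
move=> sym a b; rewrite /move_leaf.
have [->|ax] := eqVneq a x; have [E|bx] := eqVneq b x; rewrite ?E //.
Qed.

Unset Implicit Arguments. Set Strict Implicit.

Theorem mainTheorem10 (T : finType) (e : rel T) (x y x' y' : T) (p : seq T) :
  is_tree e ->
  x != y -> is_leaf e x -> is_leaf e y ->
  e x x' -> e y y' ->
  ~~ e x y ->
  (* P = x :: p is the xy-path, vertex i of P is nth x (x :: p) i, r = size p *)
  path e x p -> last x p = y -> uniq (x :: p) ->
  let r := size p in
  let Pv := x :: p in
  (wiener (move_leaf e x y') : int) - (wiener e : int) =
    \sum_(1 <= i < r) ((r%:Z - (2 * i)%:Z) * (#|hanging e Pv (nth x Pv i)| : int))
    - (r%:Z - 2).
Proof.
move=> [[sym irr] conn acyc] xy lx ly exx' eyy' nexy pth lst uq.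
cbv zeta.
set e' := move_leaf e x y'.
have cw : forall u v, exists m, walk_len e u v m && (m < #|T|)%N.
  move=> u v; case/connectP: (conn u v) => s ps ->.
  case: (shortenP ps) => s' ps' us' _; exists (size s').
  rewrite (uniq_size_lt us') andbT; apply/walk_lenP; by exists s'.
have r2 : (2 <= size p)%N.
  case E: p => [|a [|b p']] //.
    by move: lst xy; rewrite E /= => ->; rewrite eqxx.
  by move: lst pth nexy; rewrite E /= => <- /andP[exa _]; rewrite exa.
have xp : x \notin p by case/andP: uq.
have up : uniq p by case/andP: uq.
have xx' : x' = nth x (x :: p) 1.
  have := (pathP x pth) 0%N (ltnW r2); exact: leaf_uniq lx exx'.
have yE : nth x (x :: p) (size p) = y by rewrite -last_nth.
have yy' : y' = nth x (x :: p) (size p).-1.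
  have := (pathP x pth) (size p).-1; rewrite nth_last lst => /(_ _) H.
  apply: leaf_uniq ly eyy' _; rewrite sym; apply: H; clear - r2; lia.
have sym' : symmetric e' by apply: move_leaf_sym.
have lf' : forall w, e' x w = (w == y') by move=> w; rewrite /e' /move_leaf eqxx.
have lfT : forall w, e x w = (w == x').
  by move=> w; apply/idP/eqP => [h|->] //; exact: leaf_uniq lx h exx'.
have agree : {in [pred a | a != x] &, e =2 e'}.
  by move=> a b; rewrite !inE => ax bx; rewrite /e' /move_leaf (negbTE ax) (negbTE bx).
have agree' : {in [pred a | a != x] &, e' =2 e}.
  by move=> a b ax bx; rewrite agree.
have y'x : y' != x.
  by apply/eqP => h; rewrite h sym in eyy'; rewrite eyy' in nexy.
have x'x : x' != x by apply/eqP => h; rewrite h irr in exx'.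
have lfT1 : forall w, e x w -> w = x' by move=> w; rewrite lfT => /eqP.
have lf'1 : forall w, e' x w -> w = y' by move=> w; rewrite lf' => /eqP.
have dTT' : forall u v, u != x -> v != x -> dist e' u v = dist e u v.
  move=> u v ux vx; have [m /andP[w mN]] := cw u v.
  have [w' le1] := transfer sym lfT1 agree ux vx w mN.
  have [_ dN] := dist_walk w mN.
  have [_ le2] := transfer sym' lf'1 agree' ux vx w' dN.
  by apply/eqP; rewrite eqn_leq le1 le2.
have dT : forall v, v != x -> dist e x v = (dist e x' v).+1.
  move=> v vx; have [m /andP[w mN]] := cw x' v.
  exact: leaf_dist sym lfT x'x vx w mN.
have dT' : forall v, v != x -> dist e' x v = (dist e y' v).+1.
  move=> v vx; have [m /andP[w mN]] := cw y' v.
  have [w' _] := transfer sym lfT1 agree y'x vx w mN.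
  have [_ dN] := dist_walk w mN.
  rewrite (leaf_dist sym' lf' y'x vx w' dN) dTT' //.
have W2 : forall f : rel T, symmetric f ->
    ((2 * wiener f)%N : int) = \sum_u \sum_v (dist f u v : int).
  move=> f sf; rewrite wiener2 // Posz_sum; apply: eq_bigr => u _; exact: Posz_sum.
set h := fun v => (dist e y' v : int) - (dist e x' v : int).
set g := fun u v => (dist e' u v : int) - (dist e u v : int).
have gxx : g x x = 0 by rewrite /g !dist0 subrr.
have gE : forall u v, g u v = (if u == x then g x v else 0) + (if v == x then g x u else 0).
  move=> u v; have [->|ux] := eqVneq u x; have [->|vx] := eqVneq v x.
  - by rewrite gxx addr0.
  - by rewrite addr0.
  - by rewrite add0r /g (dist_sym u x sym') (dist_sym u x sym).
  - by rewrite addr0 /g dTT' // subrr.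
have E3 : \sum_u \sum_v (dist e' u v : int) - \sum_u \sum_v (dist e u v : int)
    = (\sum_(v | v != x) h v) *+ 2.
  rewrite -sumrB.
  transitivity (\sum_u \sum_v g u v).
    by apply: eq_bigr => u _; rewrite -sumrB.
  transitivity (\sum_u \sum_v ((if u == x then g x v else 0) + (if v == x then g x u else 0))).
    by apply: eq_bigr => u _; apply: eq_bigr => v _; rewrite -gE.
  rewrite (eq_bigr (fun u => (if u == x then \sum_v g x v else 0) + g x u)); last first.
    move=> u _; rewrite big_split /=; congr (_ + _).
      by case: (u == x) => //; rewrite big1.
    by rewrite -big_mkcond big_pred1_eq.
  rewrite big_split /= -big_mkcond big_pred1_eq mulr2n; congr (_ + _).
  1,2: rewrite [RHS]big_mkcond /=; apply: eq_bigr => v _.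
  1,2: have [->|vx] := eqVneq v x; first by rewrite gxx.
  1,2: by rewrite /= /g /h dT' // dT // L_S.
have main1 : (wiener e' : int) - (wiener e : int) = \sum_(v | v != x) h v.
  move: E3; rewrite -(W2 _ sym') -(W2 _ sym) mulr2n; exact: L_half.
rewrite main1.
have Kd := Kdist2 sym acyc pth uq.
rewrite (bigID (fun v => v \in p)) /=.
have -> : \sum_(v | (v != x) && (v \in p)) h v = \sum_(v <- p) h v.
  rewrite big_uniq //; apply: eq_bigl => v.
  by have [->|vx] := eqVneq v x; rewrite ?eqxx ?(negbTE xp).
have -> : \sum_(v | (v != x) && (v \notin p)) h v = \sum_(v | v \notin x :: p) h v.
  by apply: eq_bigl => v; rewrite inE negb_or.
have P1 : \sum_(v <- p) h v = 2%:Z - (size p)%:Z.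
  rewrite (big_nth x).
  have [n sn] : exists n, size p = n.+2 by exists (size p - 2)%N; clear - r2; lia.
  transitivity (- (n%:Z)); last by rewrite sn L_n.
  rewrite -(arith n) -sn.
  apply: eq_big_nat => k /andP[_ kp].
  have E0 : nth x p k = nth x (x :: p) k.+1 by [].
  rewrite /h xx' yy' E0.
  have j1 : ((size p).-1 <= size p)%N := leq_pred _.
  have one : (1 <= size p)%N := ltnW r2.
  rewrite (Kd _ _ _ j1 kp (or_introl erefl)) (Kd _ _ _ one kp (or_introl erefl)) dist0 !addn0.
  by rewrite sn.
set S := x :: p.
pose H := fun i => hanging e S (nth x S i).
have Hsub : forall i v, v \in H i -> v \notin S by move=> i v; rewrite inE => /andP[].
have x'S : x' \in S by rewrite xx'; apply: mem_nth; rewrite /=; clear - r2; lia.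
have y'S : y' \in S by rewrite yy'; apply: mem_nth; rewrite /=; clear - r2; lia.
have erS : symmetric (fun a b => [&& e a b, a \notin S & b \notin S]).
  by move=> a b /=; rewrite sym; congr andb; exact: andbC.
have att : forall v, v \notin S -> exists2 i, (1 <= i < size p)%N & v \in H i.
  move=> v vS; have [m /andP[w mN]] := cw v x; case/walk_lenP: w => s [ps ls _].
  have lS : last v s \in S by rewrite ls inE eqxx.
  have [w [z [wS zS ewz cvw]]] := first_hit ps vS lS.
  have zx : z != x.
    apply: contraNneq wS => zx; rewrite zx sym in ewz; by rewrite (lfT1 _ ewz).
  have zy : z != y.
    apply: contraNneq wS => zy; rewrite zy sym in ewz; by rewrite (leaf_uniq ly ewz eyy').
  have ni := nth_index x zS.
  have il : (index z S < size S)%N by rewrite index_mem.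
  have i0 : index z S != 0%N by apply: contraNneq zx => E; rewrite -ni E.
  have i1 : index z S != size p by apply: contraNneq zy => E; rewrite -ni E yE.
  exists (index z S); first exact: L_idx i0 i1 il.
  rewrite inE vS /= ni; apply/existsP; exists w; rewrite wS sym ewz /=.
  by rewrite (sym_connect_sym erS).
have uniqH : forall v i j, (i <= size p)%N -> (j <= size p)%N -> v \in H i -> v \in H j -> i = j.
  move=> v i j ip jp vi vj.
  exact: L_uniq (Kd i j v ip jp (or_intror vj)) (Kd j i v jp ip (or_intror vi)).
have P2 : \sum_(v | v \notin S) h v
    = \sum_(1 <= i < size p) ((size p)%:Z - (2 * i)%:Z) * (#|H i| : int).
  transitivity (\sum_(v | v \notin S) \sum_(1 <= i < size p)
      (if v \in H i then ((size p)%:Z - (2 * i)%:Z) else 0)).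
    apply: eq_bigr => v vS; have [i0 ri0 vi0] := att v vS.
    rewrite (bigD1_seq i0) /=; first last.
    - exact: iota_uniq.
    - by rewrite mem_index_iota.
    rewrite vi0 big1_seq ?addr0; last first.
      move=> i /andP[ii0 iin]; case: ifP => // vi.
      move: iin; rewrite mem_index_iota => iin.
      case/andP: iin => _ /ltnW ip; case/andP: ri0 => _ /ltnW i0p.
      by move: ii0; rewrite (uniqH v i i0 ip i0p vi vi0) eqxx.
    have i0p : (i0 <= size p)%N by case/andP: ri0 => _ /ltnW.
    rewrite /h xx' yy' (Kd _ _ v (leq_pred _) i0p (or_intror vi0)).
    rewrite (Kd _ _ v (ltnW r2) i0p (or_intror vi0)); exact: L_h.
  rewrite exchange_big /=; apply: eq_bigr => i _.
  rewrite -big_mkcondr /= (eq_bigl (fun v => v \in H i)); last first.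
    move=> v /=; apply/andP/idP => [[] //|vi]; split => //; exact: Hsub vi.
  by rewrite sumr_const -mulr_natr natz.
by rewrite P1 P2 L_fin.
Qed.
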